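(* Let $f_1,f_2$ be strongly hyperbolic functions, $a_0>0$, $b_0,c_0\in\mathbb{R}$, $C=\overline{f_{a_0,b_0,c_0}}$ and $p=(\infty,c_0)$. Let $q\in\mathcal{P}$ with $q\notin C$ and $q$ not parallel to $p$. Then there exist $a_1>0$, $b_1,c_1\in\mathbb{R}$ such that $D=\overline{f_{a_1,b_1,c_1}}$ contains $p$ and $q$ and $C\cap D=\{p\}$.
   Context: Identify $\mathbb{S}^1$ with $\mathbb{R}\cup\{\infty\}$, $\mathcal{P}=\mathbb{S}^1\times\mathbb{S}^1$, $\mathbb{R}^+=(0,\infty)$. Two points of $\mathcal{P}$ are parallel if they have the same first coordinate or the same second coordinate. A function $f:\mathbb{R}^+\to\mathbb{R}^+$ is strongly hyperbolic if: (1) $\lim_{x\to0+}f(x)=+\infty$, $\lim_{x\to+\infty}f(x)=0$; (2) $f$ strictly convex; (3) $\lim_{x\to+\infty}f(x+b)/f(x)=1$ for each $b\in\mathbb{R}$; (4) $f$ differentiable; (5) $\ln|f'|$ strictly convex. For $a>0$, $b,c\in\mathbb{R}$: $f_{a,b,c}(x)=af_1(x+b)+c$ for $x>-b$, $f_{a,b,c}(x)=-af_2(-x-b)+c$ for $x<-b$; $\overline{f_{a,b,c}}=\{(x,f_{a,b,c}(x)):x\ne-b\}\cup\{(-b,\infty),(\infty,c)\}$. *)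

(* Defs.v *)
From Stdlib Require Import Reals.
Open Scope R_scope.

(* S^1 = R ∪ {∞}: [Some x] is the real x, [None] is ∞. *)
Definition S1 := option R.
Definition Pt := (S1 * S1)%type.

Definition parallel (p q : Pt) : Prop := fst p = fst q \/ snd p = snd q.

Definition strictly_convex_pos (g : R -> R) : Prop :=
  forall x y t, 0 < x -> 0 < y -> x <> y -> 0 < t < 1 ->
    g (t * x + (1 - t) * y) < t * g x + (1 - t) * g y.

(* f : R^+ -> R^+ is represented by a total function whose values on (0,∞) matter. *)
Definition strongly_hyperbolic (f : R -> R) : Prop :=
  (forall x, 0 < x -> 0 < f x) /\
  (forall M, exists d, 0 < d /\ forall x, 0 < x < d -> M < f x) /\
  (forall e, 0 < e -> exists N, forall x, N < x -> Rabs (f x) < e) /\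
  strictly_convex_pos f /\
  (forall b e, 0 < e -> exists N, forall x, N < x -> Rabs (f (x + b) / f x - 1) < e) /\
  (exists f' : R -> R,
     (forall x, 0 < x -> derivable_pt_lim f x (f' x)) /\
     strictly_convex_pos (fun x => ln (Rabs (f' x)))).

(* f_{a,b,c} built from f1, f2 (value at x = -b is irrelevant) *)
Definition fabc (f1 f2 : R -> R) (a b c : R) (x : R) : R :=
  if Rlt_dec (- b) x then a * f1 (x + b) + c else - a * f2 (- x - b) + c.

Definition curve (f1 f2 : R -> R) (a b c : R) (p : Pt) : Prop :=
  match p with
  | (Some x, Some y) => x <> - b /\ y = fabc f1 f2 a b c x
  | (Some x, None) => x = - b
  | (None, Some y) => y = c
  | (None, None) => False
  end.

(* Main.v *)
Require Import Defs.
From Stdlib Require Import Reals Lra.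
Open Scope R_scope.

Lemma sh_decr (f : R -> R) : strongly_hyperbolic f ->
  forall x y, 0 < x -> x < y -> f y < f x.
Proof.
  intros [Hpos [_ [Hlim [Hcv _]]]] x y Hx Hxy.
  destruct (Rlt_le_dec (f y) (f x)) as [H|H]; [exact H|exfalso].
  assert (Hfy : 0 < f y) by (apply Hpos; lra).
  destruct (Hlim (f y) Hfy) as [N HN].
  set (z := Rmax N y + 1).
  assert (Hz1 : N < z) by (unfold z; pose proof (Rmax_l N y); lra).
  assert (Hz2 : y < z) by (unfold z; pose proof (Rmax_r N y); lra).
  specialize (HN z Hz1).
  set (t := (z - y) / (z - x)).
  assert (Ht : 0 < t < 1).
  { unfold t; split.
    - apply Rdiv_lt_0_compat; lra.
    - apply (Rmult_lt_reg_r (z - x)); [lra|].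
      unfold Rdiv; rewrite Rmult_assoc, Rinv_l; lra. }
  assert (Hy : t * x + (1 - t) * z = y).
  { unfold t; field; lra. }
  pose proof (Hcv x z t Hx ltac:(lra) ltac:(lra) Ht) as Hc.
  rewrite Hy in Hc.
  assert (Hfz : f y <= f z).
  { assert (0 < 1 - t) by lra.
    assert ((1 - t) * f y <= (1 - t) * f z) by nra.
    nra. }
  pose proof (Rle_abs (f z)); lra.
Qed.

Lemma sh_surj (f : R -> R) : strongly_hyperbolic f ->
  forall v, 0 < v -> exists t, 0 < t /\ f t = v.
Proof.
  intros Hsh v Hv.
  destruct Hsh as [Hpos [Hd [Hlim [Hcv [_ [f' [Hder _]]]]]]].
  destruct (Hd v) as [d [Hd0 Hdd]].
  destruct (Hlim v Hv) as [N HN].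
  set (u := d / 2).
  set (w := Rmax N d + 1).
  assert (Hu : 0 < u < d) by (unfold u; lra).
  assert (Hw1 : N < w) by (unfold w; pose proof (Rmax_l N d); lra).
  assert (Hw2 : d < w) by (unfold w; pose proof (Rmax_r N d); lra).
  assert (Hfu : v < f u) by (apply Hdd; lra).
  assert (Hfw : f w < v) by (pose proof (HN w Hw1); pose proof (Rle_abs (f w)); lra).
  destruct (Ranalysis5.IVT_interv (fun s => v - f s) u w) as [s [Hs1 Hs2]].
  - intros a Ha. apply continuity_pt_minus.
    + apply continuity_pt_const. intros ? ?; reflexivity.
    + apply derivable_continuous_pt. exists (f' a). apply Hder. lra.
  - lra.
  - simpl; lra.
  - simpl; lra.
  - exists s. split; [lra|]. simpl in Hs2; lra.
Qed.

Lemma fabc_ne (f1 f2 : R -> R) a b0 b1 c x :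
  strongly_hyperbolic f1 -> strongly_hyperbolic f2 -> 0 < a -> b0 < b1 ->
  x <> - b0 -> x <> - b1 -> fabc f1 f2 a b0 c x <> fabc f1 f2 a b1 c x.
Proof.
  intros H1 H2 Ha Hb Hx0 Hx1 E. unfold fabc in E.
  pose proof (proj1 H1) as P1. pose proof (proj1 H2) as P2.
  destruct (Rlt_dec (- b0) x); destruct (Rlt_dec (- b1) x); try lra.
  - pose proof (sh_decr f1 H1 (x + b0) (x + b1) ltac:(lra) ltac:(lra)). nra.
  - pose proof (P1 (x + b1) ltac:(lra)). pose proof (P2 (- x - b0) ltac:(lra)). nra.
  - pose proof (sh_decr f2 H2 (- x - b1) (- x - b0) ltac:(lra) ltac:(lra)). nra.
Qed.

Lemma inter (f1 f2 : R -> R) a b0 b1 c :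
  strongly_hyperbolic f1 -> strongly_hyperbolic f2 -> 0 < a -> b0 <> b1 ->
  forall r : Pt, (curve f1 f2 a b0 c r /\ curve f1 f2 a b1 c r) <-> r = (None, Some c).
Proof.
  intros H1 H2 Ha Hb r; split.
  - destruct r as [[x|] [y|]]; simpl; intros [A B].
    + destruct A as [A1 A2]; destruct B as [B1 B2]. exfalso.
      destruct (Rlt_dec b0 b1).
      * apply (fabc_ne f1 f2 a b0 b1 c x); auto; congruence.
      * apply (fabc_ne f1 f2 a b1 b0 c x); auto; [lra|congruence].
    + lra.
    + subst; reflexivity.
    + contradiction.
  - intros ->; simpl; auto.
Qed.

Theorem lemma4p11 (f1 f2 : R -> R) (a0 b0 c0 : R) (q : Pt) :
  strongly_hyperbolic f1 -> strongly_hyperbolic f2 -> 0 < a0 ->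
  ~ curve f1 f2 a0 b0 c0 q ->
  ~ parallel q (None, Some c0) ->
  exists a1 b1 c1 : R, 0 < a1 /\
    curve f1 f2 a1 b1 c1 (None, Some c0) /\ curve f1 f2 a1 b1 c1 q /\
    (forall r : Pt, (curve f1 f2 a0 b0 c0 r /\ curve f1 f2 a1 b1 c1 r) <-> r = (None, Some c0)).
Proof.
  intros H1 H2 Ha Hq Hpar.
  destruct q as [[x|] [y|]]; unfold parallel in Hpar; simpl in Hpar.
  - assert (Hy : y <> c0) by (intro; apply Hpar; right; congruence).
    destruct (Rlt_le_dec c0 y) as [Hlt|Hle].
    + destruct (sh_surj f1 H1 ((y - c0) / a0)) as [t [Ht Hft]].
      { apply Rdiv_lt_0_compat; lra. }
      assert (Hc : curve f1 f2 a0 (t - x) c0 (Some x, Some y)).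
      { simpl. split; [lra|]. unfold fabc.
        destruct (Rlt_dec (- (t - x)) x); [|lra].
        replace (x + (t - x)) with t by ring. rewrite Hft. field; lra. }
      exists a0, (t - x), c0. split; [lra|]. split; [simpl; reflexivity|]. split; [exact Hc|].
      apply inter; auto. intro E. apply Hq. rewrite E. exact Hc.
    + destruct (sh_surj f2 H2 ((c0 - y) / a0)) as [t [Ht Hft]].
      { apply Rdiv_lt_0_compat; lra. }
      assert (Hc : curve f1 f2 a0 (- x - t) c0 (Some x, Some y)).
      { simpl. split; [lra|]. unfold fabc.
        destruct (Rlt_dec (- (- x - t)) x); [lra|].
        replace (- x - (- x - t)) with t by ring. rewrite Hft. field; lra. }
      exists a0, (- x - t), c0. split; [lra|]. split; [simpl; reflexivity|]. split; [exact Hc|].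
      apply inter; auto. intro E. apply Hq. rewrite E. exact Hc.
  - assert (Hc : curve f1 f2 a0 (- x) c0 (Some x, None)) by (simpl; ring).
    exists a0, (- x), c0. split; [lra|]. split; [simpl; reflexivity|]. split; [exact Hc|].
    apply inter; auto. intro E. apply Hq. rewrite E. exact Hc.
  - exfalso; apply Hpar; left; reflexivity.
  - exfalso; apply Hpar; left; reflexivity.
Qed.
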